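(* Let $(\mathcal T,d)$ be a metric space, $f:\mathcal X^n\to\mathcal T$, $\ell:\mathbb R_+\to\mathbb R_+$ non-decreasing, $L(s,t)=\ell(d(s,t))$, and $\varepsilon>0$. If $M$ is an $\varepsilon$-differentially private mechanism with values in $\mathcal T$, then for every integer $k\ge1$, $$\sup_{x\in\mathcal X^n}\mathbb E[L(M(x),f(x))]\ge \sup_{x\in\mathcal X^n}\frac{\ell(\omega_f(x;k)/2)}{e^{k\varepsilon}+1}.$$ If $M$ is additionally $L$-unbiased, then for every $x\in\mathcal X^n$ and every integer $k\ge1$, $$\mathbb E[L(M(x),f(x))]\ge \frac{\ell(\omega_f(x;k)/2)}{e^{2k\varepsilon}+1}.$$
   Context: For $x,x'\in\mathcal X^n$, $d_H(x,x')=|\{i:x_i\neq x_i'\}|$ is the Hamming distance; $x,x'$ are neighboring if $d_H(x,x')\le 1$. A mechanism $M$ is $\varepsilon$-differentially private if for all neighboring $x,x'$ and all measurable $S$, $\mathbb P(M(x)\in S)\le e^{\varepsilon}\mathbb P(M(x')\in S)$. The local modulus of continuity is $\omega_f(x;k)=\sup\{d(f(x),f(x')):x'\in\mathcal X^n,\ d_H(x,x')\le k\}$ for real $k\ge0$. A mechanism $M$ is $L$-unbiased if $\mathbb E[L(M(x),f(x))]\le \mathbb E[L(M(x),t)]$ for all $x\in\mathcal X^n$, $t\in\mathcal T$. *)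

(* Defs.v *)
From HB Require Import structures.
From mathcomp Require Import all_boot all_order all_algebra.
From mathcomp Require Import all_classical all_reals all_analysis.
Set Implicit Arguments. Unset Strict Implicit. Unset Printing Implicit Defensive.
Import Order.TTheory GRing.Theory Num.Theory.
Local Open Scope classical_set_scope.
Local Open Scope ring_scope.

Definition is_metric (R : realType) (T : Type) (d : T -> T -> R) : Prop :=
  (forall s t, 0 <= d s t) /\
  (forall s t, d s t = 0 <-> s = t) /\
  (forall s t, d s t = d t s) /\
  (forall r s t, d r t <= d r s + d s t).

Definition hamming (X : Type) (n : nat) (x x' : 'I_n -> X) : nat :=
  #|[set i : 'I_n | `[< x i <> x' i >]]|%N.

Definition neighboring (X : Type) (n : nat) (x x' : 'I_n -> X) : Prop :=
  (hamming x x' <= 1)%N.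

(* A mechanism is given by the law of M(x) for each dataset x. *)
Definition diff_private (R : realType) (X : Type) (n : nat)
  (dT : measure_display) (T : measurableType dT)
  (M : ('I_n -> X) -> probability T R) (eps : R) : Prop :=
  forall x x', neighboring x x' ->
    forall S : set T, measurable S ->
      (M x S <= (expR eps)%:E * M x' S)%E.

Definition local_modulus (R : realType) (X T : Type) (n : nat)
  (d : T -> T -> R) (f : ('I_n -> X) -> T) (x : 'I_n -> X) (k : R) : \bar R :=
  ereal_sup [set (d (f x) (f x'))%:E | x' in [set x' | (hamming x x')%:R <= k]].

(* extension of l : R_+ -> R_+ to [0, +oo]: l(+oo) = sup l *)
Definition ext_loss (R : realType) (l : R -> R) (r : \bar R) : \bar R :=
  match r with
  | r%:E => (l r)%:E
  | +oo%E => ereal_sup [set (l s)%:E | s in [set s : R | 0 <= s]]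
  | -oo%E => 0%E
  end.

Definition exp_loss (R : realType) (X : Type) (n : nat)
  (dT : measure_display) (T : measurableType dT)
  (M : ('I_n -> X) -> probability T R) (d : T -> T -> R) (l : R -> R)
  (x : 'I_n -> X) (t : T) : \bar R :=
  (\int[M x]_s (l (d s t))%:E)%E.

Definition L_unbiased (R : realType) (X : Type) (n : nat)
  (dT : measure_display) (T : measurableType dT)
  (M : ('I_n -> X) -> probability T R) (d : T -> T -> R) (l : R -> R)
  (f : ('I_n -> X) -> T) : Prop :=
  forall x t, (exp_loss M d l x (f x) <= exp_loss M d l x t)%E.

(* Main.v *)
Require Import Defs.
From HB Require Import structures.
From mathcomp Require Import all_boot all_order all_algebra.
From mathcomp Require Import all_classical all_reals all_analysis.
From mathcomp Require Import measurable_realfun.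
From mathcomp Require Import ring lra.
Import Order.TTheory GRing.Theory Num.Theory.
Local Open Scope classical_set_scope.
Local Open Scope ring_scope.

Lemma hamming_sym (X : Type) n (x x' : 'I_n -> X) : hamming x x' = hamming x' x.
Proof.
rewrite /hamming; apply: eq_card => i.
by apply/idP/idP => /set_mem /asboolP H; apply/mem_set/asboolP => E; apply: H.
Qed.

Lemma hamming0 (X : Type) n (x x' : 'I_n -> X) : hamming x x' = 0%N -> x = x'.
Proof.
move=> /card0_eq H; apply: funext => i.
apply: contrapT => Hi.
have : i \in [set i0 : 'I_n | `[< x i0 <> x' i0 >]] by apply/mem_set/asboolP.
by rewrite H.
Qed.

Lemma hamming_step (X : Type) n (x x' : 'I_n -> X) m : hamming x x' = m.+1 ->
  exists x'', (hamming x x'' <= 1)%N /\ hamming x'' x' = m.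
Proof.
rewrite /hamming => Hm.
set S := [set i0 : 'I_n | `[< x i0 <> x' i0 >]] in Hm.
have : (0 < #|S|)%N by rewrite Hm.
move=> /card_gt0P [i iS].
exists (fun j => if j == i then x' i else x j); split.
  rewrite -(card1 i); apply: subset_leq_card; apply/fintype.subsetP => j.
  move=> /set_mem /asboolP; case: eqP => [->|_] H; first by rewrite inE.
  by case: H.
rewrite (cardD1 i) iS add1n in Hm; case: Hm => <-.
apply: eq_card => j; rewrite !inE.
case: (eqVneq j i) => [->|ji] /=.
  by apply/negbTE/negP => /set_mem /asboolP; rewrite eqxx; apply.
by apply/idP/idP => /set_mem /asboolP H; apply/mem_set/asboolP; move: H; rewrite (negbTE ji).
Qed.

Lemma group_dp (R : realType) (X : Type) n (dT : measure_display) (T : measurableType dT)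
  (M : ('I_n -> X) -> probability T R) eps :
  0 <= eps -> diff_private M eps -> forall m x x' (S : set T), measurable S ->
  (hamming x x' <= m)%N ->
  (M x S <= (expR (m%:R * eps))%:E * M x' S)%E.
Proof.
move=> e0 dp; elim => [|m IH] x x' S mS H.
  move: H; rewrite leqn0 => /eqP /hamming0 ->.
  by rewrite mul0r expR0 mul1e.
have [Hm|Hm] := ltnP (hamming x x') m.+1.
  apply: (le_trans (IH x x' S mS Hm)).
  apply: lee_wpmul2r; first exact: measure_ge0.
  rewrite lee_fin ler_expR; apply: ler_wpM2r => //.
  by rewrite ler_nat.
have Heq : hamming x x' = m.+1 by apply/eqP; rewrite eqn_leq H Hm.
have [x'' [H1 H2]] := @hamming_step _ _ _ _ _ Heq.
apply: (le_trans (dp x x'' H1 S mS)).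
apply: (le_trans (lee_wpmul2l _ (IH x'' x' S mS _))).
- by rewrite lee_fin expR_ge0.
- by rewrite H2.
rewrite muleA -EFinM -expRD -[in X in (_ <= X)%E]addn1 natrD mulrDl mul1r addrC.
by [].
Qed.

Section Core.
Variables (R : realType) (X : Type) (n : nat) (dT : measure_display)
  (T : measurableType dT) (d : T -> T -> R) (f : ('I_n -> X) -> T) (l : R -> R).
Hypotheses (dm : is_metric d) (l0 : forall r, 0 <= r -> 0 <= l r)
  (lmono : forall r s, 0 <= r -> r <= s -> l r <= l s)
  (lm : forall t, measurable_fun setT (fun s => l (d s t))).

Definition lev t a := [set s | l a <= l (d s t)].

Lemma mlev t a : measurable (lev t a).
Proof.
have := lm t measurableT _ (measurable_itv `[l a, +oo[); rewrite setTI.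
congr measurable; apply/seteqP; split => s /=; rewrite /lev /= in_itv /= andbT //.
Qed.

Lemma nlev_lt t a s : 0 <= a -> ~ lev t a s -> d s t < a.
Proof.
move=> a0 H; rewrite ltNge; apply/negP => Ha; apply: H; exact: lmono.
Qed.

Lemma loss_lb (P : probability T R) t a : 0 <= a ->
  ((l a)%:E * P (lev t a) <= \int[P]_s (l (d s t))%:E)%E.
Proof.
move=> a0.
rewrite -(setIT (lev t a)) -integral_indic //; last exact: mlev.
rewrite -(integralZl_indic measurableT (fun _ => lev t a)); first last.
- exact: mlev.
- by rewrite ltNge l0.
  apply: ge0_le_integral => //.
  - move=> s _; rewrite lee_fin mulr_ge0 ?l0 //.
  - apply/measurable_EFinP; apply: measurable_funM => //.
    exact: measurable_indic (mlev t a).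
  - by apply/measurable_EFinP; exact: lm.
  move=> s _; rewrite lee_fin indicE; case: (boolP (s \in lev t a)) => [/set_mem H|_].
    by rewrite mulr1.
  by rewrite mulr0 l0 //; case: dm => h _; exact: h.
Qed.

Lemma cover o t' a s : 0 <= a -> ~ lev o a s -> ~ lev t' a s -> d o t' < 2 * a.
Proof.
move=> a0 h1 h2; have := nlev_lt _ _ _ a0 h1; have := nlev_lt _ _ _ a0 h2.
case: dm => _ [_ [dsym dtri]].
have := dtri o s t'; rewrite (dsym o s) => h3 h4 h5.
apply: (le_lt_trans h3); rewrite mulr2n mulrDl mul1r; exact: ltrD.
Qed.

Lemma mE o t' a : measurable (~` lev o a `&` ~` lev t' a).
Proof. by apply: measurableI; apply: measurableC; apply: mlev. Qed.

Lemma keyK (P : probability T R) (x : 'I_n -> X) (k : R) a δ : 0 <= a -> 0 < δ ->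
  ((2*a)%:E <= local_modulus d f x k)%E ->
  exists x', ((hamming x x')%:R <= k) /\
    (P (~` lev (f x) a `&` ~` lev (f x') a) <= δ%:E)%E.
Proof.
move=> a0 d0; rewrite /local_modulus le_eqVlt => /orP [/eqP Heq|Hlt].
  pose S := [set (d (f x) (f x'))%:E | x' in [set x' | (hamming x x')%:R <= k]].
  have Hj : forall j : nat, exists x', ((hamming x x')%:R <= k) /\
      2 * a - (j.+1%:R)^-1 < d (f x) (f x').
    move=> j; have : ((2 * a - (j.+1%:R)^-1)%:E < ereal_sup S)%E.
      by rewrite -Heq lte_fin ltrBlDr ltrDl invr_gt0 ltr0Sn.
    by case/ereal_sup_gt => y [x' Hx' <-]; rewrite lte_fin => Hy; exists x'.
  have [xs Hxs] := choice Hj.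
  pose E := fun j => ~` lev (f x) a `&` ~` lev (f (xs j)) a.
  pose U := fun j => \bigcup_(i in [set i | (j <= i)%N]) E i.
  have mU : forall j, measurable (U j).
    by move=> j; apply: bigcup_measurable => i _; exact: mE.
  have capU : \bigcap_j U j = set0.
    apply/seteqP; split => // s Hs.
    have [i _ [h1 _]] := Hs 0%N I.
    have g0 := nlev_lt _ _ _ a0 h1.
    pose g := a - d s (f x).
    have gpos : 0 < g by rewrite subr_gt0.
    have [N HN] : exists N : nat, g^-1 < N.+1%:R.
      by exists (Num.Def.trunc g^-1); exact: truncnS_gt.
    have [i2 Ni2 [_ h2]] := Hs N I.
    have g2 := nlev_lt _ _ _ a0 h2.
    have := Hxs i2; case => _ H3.
    case: dm => _ [_ [dsym dtri]].
    have H4 := dtri (f x) s (f (xs i2)); rewrite (dsym (f x) s) in H4.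
    have H5 : g < (i2.+1%:R)^-1.
      rewrite /g; set iv := (i2.+1%:R)^-1 in H3 *; lra.
    have H6 : (i2.+1%:R)^-1 <= (N.+1%:R)^-1 :> R.
      by rewrite lef_pV2 ?posrE ?ltr0Sn // ler_nat ltnS.
    have H7 : (N.+1%:R)^-1 < g.
      by rewrite -[g]invrK ltf_pV2 ?posrE ?ltr0Sn ?invr_gt0.
    have : g < g.
      set i1 := (i2.+1%:R)^-1 in H5 H6; set i3 := (N.+1%:R)^-1 in H6 H7; lra.
    by rewrite ltxx.
  have ni : {homo U : i j / (i <= j)%N >-> (j <= i)%O}.
    move=> i j ij; rewrite subsetEset => s [m /= jm Em]; exists m => //.
    exact: leq_trans ij jm.
  have cv := @nonincreasing_cvg_mu _ _ _ P U
    (le_lt_trans (probability_le1 P (mU 0%N)) (ltry _)) mU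
    (ltac:(rewrite capU; exact: measurable0)) ni.
  rewrite capU measure0 in cv.
  have /fine_cvgP [_ cvf] := cv.
  have [N HN] := filter_ex (cvgr_lt 0 cvf _ d0).
  exists (xs N); split; first by case: (Hxs N).
  apply: (le_trans (le_measure _ (mem_set (mE _ _ _)) (mem_set (mU N)) _)).
    by move=> s Es; exists N => //=.
  rewrite -(fineK (fin_num_measure P _ (mU N))) lee_fin; exact: ltW.
have [y [x' Hx' <-] Hy] := ereal_sup_gt Hlt.
exists x'; split => //.
rewrite (_ : _ `&` _ = set0); first by rewrite measure0 lee_fin ltW.
apply/seteqP; split => s //= [h1 h2].
have := cover _ _ _ _ a0 h1 h2; rewrite ltNge => /negP; apply.
by rewrite -lee_fin ltW.
Qed.

Variables (M : ('I_n -> X) -> probability T R) (eps : R).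
Hypotheses (eps0 : 0 < eps) (dp : diff_private M eps).

Lemma pfin (P : probability T R) S : measurable S -> P S = (fine (P S))%:E.
Proof. by move=> mS; rewrite fineK // fin_num_measure. Qed.

Lemma core x (k : nat) a η : 0 <= a -> 0 < η ->
  ((2*a)%:E <= local_modulus d f x k%:R)%E ->
  exists x', (hamming x x' <= k)%N /\
   ((l a)%:E <= exp_loss M d l x' (f x') +
      (expR (k%:R * eps))%:E * exp_loss M d l x (f x) + η%:E)%E.
Proof.
move=> a0 η0 Hw.
set c := expR (k%:R * eps); have c0 : 0 < c := expR_gt0 _.
set la := l a; have la0 : 0 <= la := l0 _ a0.
pose δ := η / (c * la + 1).
have cla0 : 0 < c * la + 1 by rewrite ltr_wpDl // mulr_ge0 // ltW.
have δ0 : 0 < δ by rewrite divr_gt0.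
have δe : δ * (c * la + 1) = η by rewrite /δ mulfVK // gt_eqF.
have [x' [hk HC]] := keyK (M x) x k%:R a δ a0 δ0 Hw.
have hk' : (hamming x' x <= k)%N by rewrite hamming_sym -(ler_nat R).
exists x'; split; first by rewrite -(ler_nat R).
set A := lev (f x) a in HC *; set B := lev (f x') a in HC *.
set C := ~` A `&` ~` B in HC.
have mA : measurable A := mlev _ _.
have mB : measurable B := mlev _ _.
have mC : measurable C := mE _ _ _.
have h1 := loss_lb (M x) (f x) a a0.
have h2 := loss_lb (M x') (f x') a a0.
have gA := @group_dp R X n dT T M eps (ltW eps0) dp k x' x A mA hk'.
have gC := @group_dp R X n dT T M eps (ltW eps0) dp k x' x C mC hk'.
have hB : (M x' (~` B) <= M x' A + M x' C)%E.
  apply: le_trans (measureU2 _ mA mC).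
  apply: le_measure; rewrite ?inE; [exact: measurableC|exact: measurableU|].
  move=> s nB; case: (pselect (A s)) => [hA|nA]; [by left|by right].
rewrite probability_setC // in hB.
rewrite /exp_loss -/c -/la.
rewrite (pfin (M x) _ mA) in h1 gA; rewrite (pfin (M x') _ mB) in h2 hB.
rewrite (pfin (M x') _ mA) in gA hB; rewrite (pfin (M x') _ mC) in gC hB.
rewrite (pfin (M x) _ mC) in gC HC.
move: h1 h2 gA gC hB HC.
set pA := fine (M x A); set qB := fine (M x' B); set qA := fine (M x' A).
set qC := fine (M x' C); set pC := fine (M x C).
rewrite -!EFinM -!EFinD !lee_fin => h1 h2 gA gC hB HC.
rewrite -/c in gA gC; rewrite -/la in h1 h2.
apply: (le_trans _ (leeD (leeD h2 (lee_wpmul2l _ h1)) (lexx _))); last first.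
  by rewrite lee_fin ltW.
rewrite -!EFinM -!EFinD lee_fin.
have e1 : la * (1 - qB) <= la * (c * pA + c * pC).
  apply: ler_wpM2l => //; lra.
have e2 : la * (c * pC) <= la * (c * δ).
  apply: ler_wpM2l => //; apply: ler_wpM2l => //; exact: ltW.
nra.
Qed.

End Core.

Lemma finish (R : realType) (l : R -> R) (w : \bar R) (v c : R) : 0 < c -> (0 <= w)%E ->
  (forall a, 0 <= a -> ((2*a)%:E <= w)%E -> l a <= v * c) ->
  (ext_loss l (w * 2^-1%:E) * (c^-1)%:E <= v%:E)%E.
Proof.
move=> c0; case: w => [w| |] w0 Hc.
- rewrite -!EFinM /= lee_fin ler_pdivrMr //; apply: Hc.
    by rewrite mulr_ge0 // ?invr_ge0 // -lee_fin.
  by rewrite mulrC mulfVK // pnatr_eq0.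
- rewrite mulyr gtr0_sg ?invr_gt0 // mul1e /=.
  apply: (@le_trans _ _ ((v * c)%:E * (c^-1)%:E)%E).
    apply: lee_wpmul2r; first by rewrite lee_fin invr_ge0 ltW.
    apply: ge_ereal_sup => y [s s0 <-]; rewrite lee_fin; apply: Hc => //.
    exact: leey.
  by rewrite -EFinM mulfK // gt_eqF.
- by move: w0; rewrite leNgt ltNye.
Qed.

Lemma int_transfer (R : realType) (dT : measure_display) (T : measurableType dT)
  (m1 m2 : probability T R) (c : R) (c0 : 0 <= c) (g : T -> R) :
  (forall S, measurable S -> (m1 S <= c%:E * m2 S)%E) ->
  measurable_fun setT g -> (forall s, 0 <= g s) ->
  (\int[m1]_s (g s)%:E <= c%:E * \int[m2]_s (g s)%:E)%E.
Proof.
move=> H mg g0.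
rewrite -(ge0_integral_mscale m2 measurableT (NngNum c0)); last first.
- by move=> s _; rewrite lee_fin.
- exact/measurable_EFinP.
apply: (ge0_le_measure_integral (m1:=m1) (m2:=mscale (NngNum c0) m2) _ measurableT).
- by move=> S mS; rewrite /mscale /=; exact: H.
- by move=> s; rewrite lee_fin.
- exact/measurable_EFinP.
Qed.

Lemma hamming_xx (X : Type) n (x : 'I_n -> X) : hamming x x = 0%N.
Proof.
apply: eq_card0 => i; apply/negbTE/negP => /set_mem /asboolP; apply; done.
Qed.


Theorem theorem1 (R : realType) (X : Type) (n : nat)
  (dT : measure_display) (T : measurableType dT)
  (d : T -> T -> R) (f : ('I_n -> X) -> T) (l : R -> R) (eps : R)
  (M : ('I_n -> X) -> probability T R) :
  is_metric d ->
  (forall r, 0 <= r -> 0 <= l r) ->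
  (forall r s, 0 <= r -> r <= s -> l r <= l s) ->
  (forall t, measurable_fun setT (fun s => l (d s t))) ->
  0 < eps ->
  diff_private M eps ->
  (forall k : nat, (1 <= k)%N ->
     (ereal_sup [set exp_loss M d l x (f x) | x in setT] >=
      ereal_sup [set ext_loss l (local_modulus d f x k%:R * 2^-1%:E)
                      * ((expR (k%:R * eps) + 1)^-1)%:E | x in setT])%E) /\
  (L_unbiased M d l f ->
   forall (x : 'I_n -> X) (k : nat), (1 <= k)%N ->
     (exp_loss M d l x (f x) >=
      ext_loss l (local_modulus d f x k%:R * 2^-1%:E)
        * ((expR (2 * k%:R * eps) + 1)^-1)%:E)%E).
Proof.
move=> dm l0 lmono lm eps0 dp.
have dge0 : forall s t, 0 <= d s t by case: dm.
have E0ge : forall x t, (0 <= exp_loss M d l x t)%E.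
  by move=> x t; apply: integral_ge0 => s _; rewrite lee_fin l0.
have wge : forall x (k : nat), (0 <= local_modulus d f x k%:R)%E.
  move=> x k; apply: (@le_trans _ _ (d (f x) (f x))%:E); first by rewrite lee_fin.
  apply: ereal_sup_ubound; exists x => //=.
  by rewrite hamming_xx ler0n.
have epos : forall r : R, 0 < expR r + 1 by move=> r; rewrite ltr_wpDl // ltW // expR_gt0.
split.
  move=> k k1; apply: ge_ereal_sup => _ [x0 _ <-].
  set V := ereal_sup _.
  have VE : forall x, (exp_loss M d l x (f x) <= V)%E.
    by move=> x; apply: ereal_sup_ubound; exists x.
  case HV: V => [v| |]; last 2 first.
  - exact: leey.
  - by have := le_trans (E0ge x0 (f x0)) (VE x0); rewrite HV leNgt ltNye.
  rewrite HV in VE.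
  apply: finish; [exact: epos | exact: wge | ].
  move=> a a0 Ha; apply/ler_addgt0Pr => η η0.
  have [x' [_ H]] := @core R X n dT T d f l dm l0 lmono lm M eps eps0 dp x0 k a η a0 η0 Ha.
  rewrite -lee_fin; apply: (le_trans H).
  apply: (le_trans (leeD (leeD (VE x') (lee_wpmul2l _ (VE x0))) (lexx _))).
    by rewrite lee_fin expR_ge0.
  rewrite -EFinM -!EFinD lee_fin.
  set e := expR _.
  have -> : v * (e + 1) + η = v + e * v + η by ring.
  exact: lexx.
move=> ub x k k1.
set u := exp_loss M d l x (f x).
case Hu: u => [r| |]; last 2 first.
- exact: leey.
- by have := E0ge x (f x); rewrite -/u Hu leNgt ltNye.
have r0 : 0 <= r by rewrite -lee_fin -Hu /u.
apply: finish; [exact: epos | exact: wge | ].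
move=> a a0 Ha; apply/ler_addgt0Pr => η η0.
have [x' [hk H]] := @core R X n dT T d f l dm l0 lmono lm M eps eps0 dp x k a η a0 η0 Ha.
have hk' : (hamming x' x <= k)%N by rewrite hamming_sym.
set e := expR (k%:R * eps) in H.
have t1 : (exp_loss M d l x' (f x') <= exp_loss M d l x' (f x))%E := ub x' (f x).
have t2 : (exp_loss M d l x' (f x) <= e%:E * u)%E.
  apply: int_transfer; first exact: expR_ge0.
  - move=> S mS; exact: (@group_dp R X n dT T M eps (ltW eps0) dp k x' x S mS hk').
  - exact: lm.
  - by move=> s; rewrite l0.
rewrite -/u Hu in H; rewrite Hu in t2.
have H2 := le_trans H (leeD (leeD (le_trans t1 t2) (lexx _)) (lexx _)).
move: H2; rewrite -!EFinM -!EFinD lee_fin => H2.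
have ee : expR (2 * k%:R * eps) = e * e by rewrite -expRD /e; congr expR; ring.
rewrite ee.
have e0 : 0 <= e by exact: expR_ge0.
have : 0 <= r * ((e - 1) * (e - 1)) by apply: mulr_ge0 => //; rewrite -expr2 sqr_ge0.
nra.
Qed.
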